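(* Let $\beta\ge0$, $\gamma>0$, $\lambda>0$ with $\beta\gamma<1$, and let $d\ge1$ be an integer. For any vector $\mathbf{x} \in \mathbb{R}_{\geq 0}^d$ there exists $\overline{x} \geq 0$ such that $$\sum_{i=1}^d h(x_i) \leq d \cdot h(\overline{x}) \quad \text{and} \quad F_d(\mathbf{x}) = F_d(\overline{x},\ldots,\overline{x}),$$ where $h(x) = \frac{(1-\beta\gamma)x}{(\beta x+1)(x+\gamma)}$ and $F_d(\mathbf x)=\lambda\prod_{i=1}^d\frac{\beta x_i+1}{x_i+\gamma}$. *)

(* Defs.v *)
From Stdlib Require Import Reals.
Open Scope R_scope.

Definition h (beta gamma x : R) : R :=
  (1 - beta * gamma) * x / ((beta * x + 1) * (x + gamma)).

(* sum_{i=1}^d f(x_i), vector indexed by i = 0..d-1 *)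
Fixpoint sumd (d : nat) (f : nat -> R) : R :=
  match d with O => 0 | S n => sumd n f + f n end.

Fixpoint prodd (d : nat) (f : nat -> R) : R :=
  match d with O => 1 | S n => prodd n f * f n end.

Definition F (beta gamma lambda : R) (d : nat) (x : nat -> R) : R :=
  lambda * prodd d (fun i => (beta * x i + 1) / (x i + gamma)).

(* Main.v *)
Require Import Defs.
From Stdlib Require Import Reals Lra Lia.
Open Scope R_scope.

Lemma sumd_ext d f g : (forall i, (i < d)%nat -> f i = g i) -> sumd d f = sumd d g.
Proof. induction d; simpl; intros H; auto. rewrite IHd by (intros; apply H; lia). rewrite H by lia. auto. Qed.

Lemma prodd_ext d f g : (forall i, (i < d)%nat -> f i = g i) -> prodd d f = prodd d g.
Proof. induction d; simpl; intros H; auto. rewrite IHd by (intros; apply H; lia). rewrite H by lia. auto. Qed.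

Lemma sumd_le d f g : (forall i, (i < d)%nat -> f i <= g i) -> sumd d f <= sumd d g.
Proof. induction d; simpl; intros H; [lra|]. assert (f d <= g d) by (apply H; lia).
  assert (sumd d f <= sumd d g) by (apply IHd; intros; apply H; lia). lra. Qed.

Lemma sumd_lt d f g : (1 <= d)%nat -> (forall i, (i < d)%nat -> f i < g i) -> sumd d f < sumd d g.
Proof. induction d; simpl; intros Hd H; [lia|]. assert (f d < g d) by (apply H; lia).
  destruct d. simpl; lra.
  assert (sumd (S d) f < sumd (S d) g) by (apply IHd; [lia|intros; apply H; lia]). lra. Qed.

Lemma sumd_lin d a b c f g : sumd d (fun i => a * f i + b * g i + c) = a * sumd d f + b * sumd d g + INR d * c.
Proof. induction d; cbn [sumd]. simpl INR; ring. rewrite IHd, S_INR. ring. Qed.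

Lemma sumd_const d c : sumd d (fun _ => c) = INR d * c.
Proof. induction d; cbn [sumd]. simpl INR; ring. rewrite IHd, S_INR. ring. Qed.

Lemma prodd_exp d u : (forall i, (i < d)%nat -> 0 < u i) -> prodd d u = exp (sumd d (fun i => ln (u i))).
Proof. induction d; simpl; intros H. rewrite exp_0; auto.
  rewrite exp_plus, IHd by (intros; apply H; lia). rewrite exp_ln by (apply H; lia). auto. Qed.

Theorem lemma3p16 (beta gamma lambda : R) (d : nat) (x : nat -> R) :
  0 <= beta -> 0 < gamma -> 0 < lambda -> beta * gamma < 1 ->
  (1 <= d)%nat ->
  (forall i, (i < d)%nat -> 0 <= x i) ->
  exists xbar : R, 0 <= xbar /\
    sumd d (fun i => h beta gamma (x i)) <= INR d * h beta gamma xbar /\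
    F beta gamma lambda d x = F beta gamma lambda d (fun _ => xbar).
Proof.
  intros Hb Hg Hl Hbg Hd Hx.
  set (g := fun y => (beta * y + 1) / (y + gamma)).
  assert (gpos : forall y, 0 <= y -> 0 < g y).
  { intros y Hy; unfold g; apply Rdiv_lt_0_compat; nra. }
  assert (gb : forall y, 0 <= y -> beta < g y).
  { intros y Hy; unfold g. apply Rmult_lt_reg_r with (y + gamma); [lra|].
    unfold Rdiv; rewrite Rmult_assoc, Rinv_l by lra. nra. }
  assert (gg : forall y, 0 <= y -> g y <= / gamma).
  { intros y Hy; unfold g. apply Rmult_le_reg_r with (y + gamma); [lra|].
    unfold Rdiv; rewrite Rmult_assoc, Rinv_l by lra.
    apply Rmult_le_reg_l with gamma; [lra|].
    replace (gamma * (/ gamma * (y + gamma))) with (y + gamma) by (field; lra). nra. }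
  assert (hu : forall y, 0 <= y -> 0 < g y -> h beta gamma y = (1 + beta*gamma - beta * / g y - gamma * g y) / (1 - beta*gamma)).
  { intros y Hy Hgy. unfold h. unfold g in *.
    assert (beta * y + 1 <> 0) by nra. field. repeat split; lra. }
  set (u := fun i => g (x i)).
  set (S := sumd d (fun i => ln (u i))).
  assert (dpos : 0 < INR d) by (apply lt_0_INR; lia).
  set (L := S / INR d).
  set (ub := exp L).
  assert (ubpos : 0 < ub) by apply exp_pos.
  assert (SL : INR d * L = S) by (unfold L; field; lra).
  assert (ubg : ub <= / gamma).
  { assert (S <= INR d * ln (/ gamma)).
    { rewrite <- sumd_const. apply sumd_le. intros i Hi.
      destruct (gg (x i) (Hx i Hi)) as [Hlt|Heq].
      - left; apply ln_increasing; [apply gpos, Hx, Hi | exact Hlt].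
      - unfold u; rewrite Heq; lra. }
    assert (L <= ln (/ gamma)).
    { apply Rmult_le_reg_l with (INR d); lra. }
    unfold ub. destruct H0 as [Hlt|Heq].
    - left. rewrite <- (exp_ln (/ gamma)) by (apply Rinv_0_lt_compat; lra). apply exp_increasing; auto.
    - rewrite Heq, exp_ln by (apply Rinv_0_lt_compat; lra). lra. }
  assert (ubb : beta < ub).
  { destruct Hb as [Hb|Hb]; [|lra].
    assert (INR d * ln beta < S).
    { rewrite <- sumd_const. apply sumd_lt; auto. intros i Hi.
      apply ln_increasing; auto. apply gb, Hx, Hi. }
    assert (ln beta < L) by (apply Rmult_lt_reg_l with (INR d); lra).
    unfold ub. rewrite <- (exp_ln beta) by lra. apply exp_increasing; auto. }
  set (xbar := (1 - gamma * ub) / (ub - beta)).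
  assert (xb0 : 0 <= xbar).
  { unfold xbar. apply Rmult_le_pos; [|left; apply Rinv_0_lt_compat; lra].
    assert (gamma * ub <= 1).
    { apply Rmult_le_reg_l with (/ gamma). apply Rinv_0_lt_compat; lra.
      replace (/ gamma * (gamma * ub)) with ub by (field; lra). lra. }
    lra. }
  assert (gxb : g xbar = ub).
  { unfold g, xbar.
    replace ((1 - gamma * ub) / (ub - beta) + gamma) with ((1 - beta*gamma) / (ub - beta)) by (field; lra).
    field. split; lra. }
  exists xbar. split; [exact xb0|split].
  - rewrite (sumd_ext d _ (fun i => (/ (1 - beta*gamma)) * (-beta * / u i + -gamma * u i) + 0 * u i + (1 + beta*gamma)/(1 - beta*gamma))).
    2:{ intros i Hi. rewrite hu by (apply Hx, Hi || apply gpos, Hx, Hi). unfold u. assert (0 < g (x i)) by (apply gpos, Hx, Hi). field. split; lra. }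
    rewrite sumd_lin.
    rewrite hu, gxb by (rewrite ?gxb; lra).
    assert (A1 : INR d * ub <= sumd d u).
    { apply Rle_trans with (sumd d (fun i => ub * ln (u i) + 0 * u i + ub * (1 - L))).
      - rewrite sumd_lin. fold S. rewrite <- SL. lra.
      - apply sumd_le. intros i Hi.
        assert (0 < u i) by (apply gpos, Hx, Hi).
        replace (u i) with (ub * exp (ln (u i) - L)) at 3.
        2:{ unfold Rminus. rewrite exp_plus, exp_Ropp, exp_ln by auto. unfold ub. field. apply Rgt_not_eq, exp_pos. }
        pose proof (exp_ineq1_le (ln (u i) - L)). nra. }
    assert (A2 : INR d * / ub <= sumd d (fun i => / u i)).
    { apply Rle_trans with (sumd d (fun i => (- / ub) * ln (u i) + 0 * u i + / ub * (1 + L))).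
      - rewrite sumd_lin. fold S. rewrite <- SL. right; field. lra.
      - apply sumd_le. intros i Hi.
        assert (0 < u i) by (apply gpos, Hx, Hi).
        replace (/ u i) with (/ ub * exp (L - ln (u i))).
        2:{ unfold Rminus. rewrite exp_plus, exp_Ropp, exp_ln by auto. unfold ub. field. split; [lra| apply Rgt_not_eq, exp_pos]. }
        pose proof (exp_ineq1_le (L - ln (u i))).
        assert (0 < / ub) by (apply Rinv_0_lt_compat; lra). nra. }
    rewrite (sumd_ext d (fun i => _ * _ + _ * _) (fun i => -beta * / u i + -gamma * u i + 0)) by (intros; ring).
    rewrite sumd_lin, Rmult_0_r, Rplus_0_r.
    assert (k : 0 < / (1 - beta*gamma)) by (apply Rinv_0_lt_compat; lra).
    assert (E : INR d * ((1 + beta * gamma - beta * / ub - gamma * ub) / (1 - beta * gamma)) =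
      / (1 - beta*gamma) * (-beta * (INR d * / ub) + -gamma * (INR d * ub)) + INR d * ((1 + beta*gamma)/(1-beta*gamma))) by (field; lra).
    rewrite E. clear E.
    apply Rplus_le_compat_r. rewrite Rmult_0_l, Rplus_0_r. apply Rmult_le_compat_l; [lra|]. nra.
  - unfold F. f_equal.
    change (prodd d (fun i => g (x i)) = prodd d (fun _ => g xbar)).
    rewrite gxb. rewrite !prodd_exp.
    + f_equal. rewrite (sumd_ext d (fun _ => ln ub) (fun _ => L)) by (intros; unfold ub; apply ln_exp).
      rewrite sumd_const. rewrite SL. reflexivity.
    + intros; auto.
    + intros i Hi; apply gpos, Hx, Hi.
Qed.
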